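(* Assume (A), i.e. (A1) and (A2) hold for every level $l\in\{0,\dots,L\}$. Then for any $n,L\geq 1$ there exist constants $B_0(n),\dots,B_L(n)<+\infty$ (not depending on $N_0,\dots,N_L$) such that for any $N_0,\dots,N_L\geq 1$, $$ \mathbb{E}\Big[\Big(\widehat{p}^{L,N_{0:L}}(n)-p^{L}(n)\Big)^2\Big] \leq \sum_{l=0}^L \frac{B_l(n)}{N_l}. $$
   Context: Notation: $\mathcal U=\mathbb R^d$, $\mathcal V=\mathcal U\times\mathcal U$, $v=(u_1,u_2)$. For a probability $\mu$ on $\mathcal V$, $\mu_j$ is its $j$-th marginal, and for $\varphi:\mathcal U\to\mathbb R$, $\varphi_j(v)=\varphi(u_j)$, $\mu(\varphi_j)=\int\varphi(u_j)\mu(dv)$. Coupled particle system (one level). Given: potentials $G_p:\mathcal U\to(0,\infty)$, $p\ge0$; a probability $\eta_0$ on $\mathcal V$; Markov kernels $M_n$ from $\mathcal V$ to $\mathcal V$, $n\ge1$, for which there are Markov kernels $M_{n,j}$ on $\mathcal U$ ($j=1,2$) with $\int\varphi(u'_j)M_n(v,dv')=\int\varphi(u_j')M_{n,j}(u_j,du_j')$ for all bounded measurable $\varphi$. The marginal Feynman–Kac quantities are $\gamma_{n,j}(\varphi)=\int \varphi(u_n)\prod_{p=0}^{n-1}G_p(u_p)\,\eta_{0,j}(du_0)\prod_{p=1}^nM_{p,j}(u_{p-1},du_p)$ and $\eta_{n,j}=\gamma_{n,j}/\gamma_{n,j}(1)$. For $\mu$ a probability on $\mathcal V$ set $G_{n,j,\mu}(u)=G_n(u)/\mu_j(G_n)$,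 $\bar G_{n,\mu}(v)=G_{n,1,\mu}(u_1)\wedge G_{n,2,\mu}(u_2)$ and $$\bar\Phi_n(\mu)(dv')=\mu\big(\bar G_{n-1,\mu}M_n(\cdot,dv')\big)+\big(1-\mu(\bar G_{n-1,\mu})\big)\int\!\!\int \frac{(G_{n-1,1,\mu}-\bar G_{n-1,\mu})(v)}{\mu(G_{n-1,1,\mu}-\bar G_{n-1,\mu})}\frac{(G_{n-1,2,\mu}-\bar G_{n-1,\mu})(\tilde v)}{\mu(G_{n-1,2,\mu}-\bar G_{n-1,\mu})}M_n((u_1,\tilde u_2),dv')\mu(dv)\mu(d\tilde v),$$ (second term absent when $\mu(\bar G_{n-1,\mu})=1$; here $G_{n-1,1,\mu}$ is evaluated at $u_1$, $G_{n-1,2,\mu}$ at $\tilde u_2$). With $N$ particles: $v_0^i\stackrel{iid}{\sim}\eta_0$, and for $p\ge1$, conditionally independently $v_p^i\sim\bar\Phi_p(\bar\eta^N_{p-1})$, $i=1,\dots,N$, where $\bar\eta^N_p=\frac1N\sum_i\delta_{v_p^i}$ with $j$-th marginal $\eta^N_{p,j}$. The estimate is $\gamma^N_{n,j}(1)=\prod_{p=0}^{n-1}\eta^N_{p,j}(G_p)$. Multilevel estimator: for each level $l=0,\dots,L$ one runs, independently across levels, such a coupled system with $N_l$ particles and level-specific $(\eta_0^l,M_n^l)$ (fine marginal $j=1$ corresponds to Euler step $2^{-l}$, coarse $j=2$ to step $2^{-(l-1)}$; at level $0$ only the $j=1$ component is used), giving $\gamma^{l,N_l}_{n,j}(1)$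 and targets $\gamma^l_{n,j}(1)$. Set $\widehat p^{L,N_{0:L}}(n)=\sum_{l=0}^L\{\gamma^{l,N_l}_{n,1}(1)-\gamma^{l,N_l}_{n,2}(1)\}$ and $p^L(n)=\sum_{l=0}^L\{\gamma^{l}_{n,1}(1)-\gamma^{l}_{n,2}(1)\}$, with the level-0 second terms equal to $0$. (A1): there exist $c>1$, $C>0$ such that for all $n\ge0$, $x,x'\in\mathcal U$: $c^{-1}<G_n(x)<c$ and $|G_n(x)-G_n(x')|\le C|x-x'|$. (A2): for each $n$ there is $C_n>0$ such that for all $u,u'\in\mathcal U$, $j\in\{1,2\}$ and bounded Lipschitz $\varphi$, $|M_{n,j}(\varphi)(u)-M_{n,j}(\varphi)(u')|\le C_n\sup|\varphi|\,|u-u'|$. $\mathbb E$ denotes expectation w.r.t. the law of all particle systems. *)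

(* Defs.v *)
From HB Require Import structures.
From mathcomp Require Import all_boot all_order all_algebra.
From mathcomp Require Import all_classical all_reals all_analysis.
Set Implicit Arguments. Unset Strict Implicit. Unset Printing Implicit Defensive.
Import Order.TTheory GRing.Theory Num.Theory.
Local Open Scope classical_set_scope.
Local Open Scope ring_scope.

(* U = R^d is represented by d.-tuple R (product = Borel sigma-algebra),
   V = U * U with the product sigma-algebra. *)

Definition edist (R : realType) (d : nat) (x y : d.-tuple R) : R :=
  Num.sqrt (\sum_(i < d) (tnth x i - tnth y i) ^+ 2).

Definition emp (T : Type) (R : realType) (s : seq T) (f : T -> R) : R :=
  (\sum_(v <- s) f v) / (size s)%:R.

Definition supnorm (T : Type) (R : realType) (phi : T -> R) : R :=
  sup (range (fun x => `|phi x|)).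

Local Open Scope ereal_scope.

(* Integral of F (nonnegative) against bar Phi_n(mu) where mu = empirical measure
   of the configuration s, Mn = M_n and Gp = G_{n-1}. *)
Definition PhiInt (R : realType) (d : nat)
    (Mn : R.-pker (d.-tuple R * d.-tuple R)%type ~> (d.-tuple R * d.-tuple R)%type)
    (Gp : d.-tuple R -> R) (s : seq (d.-tuple R * d.-tuple R))
    (F : d.-tuple R * d.-tuple R -> \bar R) : \bar R :=
  let N := (size s)%:R in
  let g1 := fun v : d.-tuple R * d.-tuple R => (Gp v.1 / emp s (fun w => Gp w.1))%R in
  let g2 := fun v : d.-tuple R * d.-tuple R => (Gp v.2 / emp s (fun w => Gp w.2))%R in
  let gb := fun v => Num.min (g1 v) (g2 v) in
  let a := emp s gb in
  (\sum_(v <- s) ((gb v / N)%:E * \int[Mn v]_w F w))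
  + (if a == 1%R then 0 else
      ((1 - a)%:E *
       \sum_(v <- s) \sum_(w <- s)
         ((((g1 v - gb v) / (N * emp s (fun x => g1 x - gb x))) *
           ((g2 w - gb w) / (N * emp s (fun x => g2 x - gb x))))%:E
          * \int[Mn (v.1, w.2)]_z F z))).

(* Integration of F against the law of N conditionally i.i.d. draws, each
   drawn from the integration functional I (a probability). *)
Fixpoint intN (T : Type) (R : realType) (N : nat)
    (I : (T -> \bar R) -> \bar R) (F : seq T -> \bar R) : \bar R :=
  match N with
  | 0 => F [::]
  | N'.+1 => I (fun v => intN N' I (fun t => F (v :: t)))
  end.

(* Expectation of F(gamma^N_{n,1}(1), gamma^N_{n,2}(1)) for the coupled particle
   system: at time p with configuration s and accumulated products c1 c2 =
   prod_{q<p} eta^N_{q,j}(G_q), k further transitions to perform. *)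
Fixpoint chain (R : realType) (d : nat) (G : nat -> d.-tuple R -> R)
    (M : nat -> R.-pker (d.-tuple R * d.-tuple R)%type ~> (d.-tuple R * d.-tuple R)%type)
    (N k p : nat) (s : seq (d.-tuple R * d.-tuple R)) (c1 c2 : R)
    (F : R -> R -> \bar R) : \bar R :=
  match k with
  | 0 => F c1 c2
  | k'.+1 =>
      intN N (PhiInt (M p.+1) (G p) s)
        (fun s' => chain G M N k' p.+1 s'
                     (c1 * emp s (fun v => G p v.1))%R
                     (c2 * emp s (fun v => G p v.2))%R F)
  end.

(* Expectation for one level: v_0^i iid eta_0, then the chain up to time n. *)
Definition levelE (R : realType) (d : nat) (G : nat -> d.-tuple R -> R)
    (eta0 : probability (d.-tuple R * d.-tuple R)%type R)
    (M : nat -> R.-pker (d.-tuple R * d.-tuple R)%type ~> (d.-tuple R * d.-tuple R)%type)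
    (N n : nat) (F : R -> R -> \bar R) : \bar R :=
  intN N (fun f => \int[eta0]_v f v) (fun s => chain G M N n 0 s 1%R 1%R F).

(* contribution of level l: gamma_{n,1} - gamma_{n,2}, second term 0 at level 0 *)
Definition ldiff (R : realType) (l : nat) (c1 c2 : R) : R :=
  if l == 0%N then c1 else (c1 - c2)%R.

(* Expectation w.r.t. independent levels 0..m-1 of F(D_0, ..., D_{m-1}) where
   LE l is the expectation functional of level l. *)
Fixpoint levelsE (R : realType) (m : nat)
    (LE : nat -> (R -> R -> \bar R) -> \bar R) (F : (nat -> R) -> \bar R) : \bar R :=
  match m with
  | 0 => F (fun _ => 0%R)
  | m'.+1 => levelsE m' LE (fun D => LE m' (fun c1 c2 =>
               F (fun l => if l == m' then ldiff m' c1 c2 else D l)))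
  end.

Fixpoint hfun (R : realType) (d : nat) (G : nat -> d.-tuple R -> R)
    (K : nat -> R.-pker (d.-tuple R) ~> (d.-tuple R)) (k p : nat) (u : d.-tuple R)
    : \bar R :=
  match k with
  | 0 => 1
  | k'.+1 => (G p u)%:E * \int[K p.+1 u]_u' hfun G K k' p.+1 u'
  end.

(* gamma_{n,j}(1) with eta_{0,j} the j-th marginal of eta0 (proj = fst/snd) *)
Definition gamma1 (R : realType) (d : nat) (G : nat -> d.-tuple R -> R)
    (eta0 : probability (d.-tuple R * d.-tuple R)%type R)
    (proj : d.-tuple R * d.-tuple R -> d.-tuple R)
    (K : nat -> R.-pker (d.-tuple R) ~> (d.-tuple R)) (n : nat) : R :=
  fine (\int[eta0]_v hfun G K n 0 (proj v)).

Local Close Scope ereal_scope.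

Definition A1 (R : realType) (d : nat) (G : nat -> d.-tuple R -> R) : Prop :=
  exists c C : R, 1 < c /\ 0 < C /\
    forall (n : nat) (x x' : d.-tuple R),
      c^-1 < G n x < c /\ `|G n x - G n x'| <= C * edist x x'.

Definition A2 (R : realType) (d : nat)
    (K : nat -> R.-pker (d.-tuple R) ~> (d.-tuple R)) : Prop :=
  forall n : nat, (1 <= n)%N -> exists Cn : R, 0 < Cn /\
    forall (u u' : d.-tuple R) (phi : d.-tuple R -> R),
      measurable_fun setT phi ->
      (exists b : R, forall x, `|phi x| <= b) ->
      (exists Lc : R, forall x y, `|phi x - phi y| <= Lc * edist x y) ->
      `|Rintegral (K n u) setT phi - Rintegral (K n u') setT phi|
        <= Cn * supnorm phi * edist u u'.

(* M_n has marginal kernels M_{n,j} (proj = fst for j=1, snd for j=2) *)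
Definition marginal_kernels (R : realType) (d : nat)
    (M : nat -> R.-pker (d.-tuple R * d.-tuple R)%type ~> (d.-tuple R * d.-tuple R)%type)
    (proj : d.-tuple R * d.-tuple R -> d.-tuple R)
    (K : nat -> R.-pker (d.-tuple R) ~> (d.-tuple R)) : Prop :=
  forall (n : nat), (1 <= n)%N ->
    forall (v : d.-tuple R * d.-tuple R) (phi : d.-tuple R -> R),
      measurable_fun setT phi -> (exists b : R, forall x, `|phi x| <= b) ->
      (\int[M n v]_w (phi (proj w))%:E = \int[K n (proj v)]_u (phi u)%:E)%E.

(* Main.v *)
Require Import Defs.
From HB Require Import structures.
From mathcomp Require Import all_boot all_order all_algebra.
From mathcomp Require Import all_classical all_reals all_analysis.
From mathcomp Require Import ring lra measurable_realfun.
Import Order.TTheory GRing.Theory Num.Theory.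
Local Open Scope classical_set_scope.
Local Open Scope ring_scope.

Set Implicit Arguments. Unset Strict Implicit. Unset Printing Implicit Defensive.


Section Gen.
Context d (X : measurableType d) (R : realType).

Definition bdm (f : X -> R) := measurable_fun setT f /\ exists B : R, forall x, `|f x| <= B.

Lemma int_mono_ge0 (mu : {measure set X -> \bar R}) (f g : X -> \bar R) :
  (forall x, (0 <= f x)%E) -> (forall x, (f x <= g x)%E) ->
  (\int[mu]_x f x <= \int[mu]_x g x)%E.
Proof.
move=> f0 fg.
have g0 x : (0 <= g x)%E by apply: le_trans (fg x).
rewrite !ge0_integralTE//.
apply: ereal_sup_le => _ [h /= hf <-]; exists h => //= x.
exact: le_trans (hf x) (fg x).
Qed.

Lemma bdm_bounded (f : X -> R) : bdm f -> [bounded f x | x in [set: X]].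
Proof.
move=> [_ [B hB]]; exists B; split; first by rewrite num_real.
by move=> M BM x _; apply: le_trans (hB x) (ltW BM).
Qed.

Variable (mu : {measure set X -> \bar R}).
Hypothesis mu1 : mu setT = 1%E.

Lemma bdm_int f : bdm f -> mu.-integrable setT (EFin \o f).
Proof.
move=> bf; apply: measurable_bounded_integrable => //.
- by rewrite mu1 ltry.
- by case: bf.
- exact: bdm_bounded.
Qed.

Lemma bdm_EFin f : bdm f -> (\int[mu]_x (f x)%:E = (Rintegral mu setT f)%:E)%E.
Proof.
move=> bf; rewrite /Rintegral fineK//.
exact: (integrable_fin_num measurableT (bdm_int bf)).
Qed.

Lemma Rint_cst r : Rintegral mu setT (fun _ => r) = r.
Proof. by rewrite Rintegral_cst// mu1 /= mulr1. Qed.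

Lemma bdm_lin f g a b : bdm f -> bdm g -> bdm (fun x => a * f x + b * g x).
Proof.
move=> [mf [B1 h1]] [mg [B2 h2]]; split.
  by apply: measurable_funD; apply: measurable_funM.
exists (`|a| * B1 + `|b| * B2) => x.
apply: le_trans (ler_normD _ _) _; rewrite !normrM.
by apply: lerD; apply: ler_wpM2l.
Qed.

Lemma bdm_cst r : bdm (fun _ => r).
Proof. by split => //; exists `|r|. Qed.

Lemma bdm_mul f g : bdm f -> bdm g -> bdm (fun x => f x * g x).
Proof.
move=> [mf [B1 h1]] [mg [B2 h2]]; split; first exact: measurable_funM.
exists (B1 * B2) => x; rewrite normrM; apply: ler_pM => //.
Qed.

Lemma Rint_lin f g a b : bdm f -> bdm g ->
  Rintegral mu setT (fun x => a * f x + b * g x) =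
  a * Rintegral mu setT f + b * Rintegral mu setT g.
Proof.
move=> bf bg.
have bf' : bdm (fun x => a * f x).
  have -> : (fun x => a * f x) = (fun x => a * f x + 0 * f x).
    by apply: funext => x; rewrite mul0r addr0.
  exact: bdm_lin.
have bg' : bdm (fun x => b * g x).
  have -> : (fun x => b * g x) = (fun x => b * g x + 0 * g x).
    by apply: funext => x; rewrite mul0r addr0.
  exact: bdm_lin.
rewrite RintegralD//; try exact: bdm_int.
by rewrite !RintegralZl//; exact: bdm_int.
Qed.

Lemma Rint_ge0 f : (forall x, 0 <= f x) -> 0 <= Rintegral mu setT f.
Proof. by move=> f0; apply: Rintegral_ge0 => x _; exact: f0. Qed.

Lemma Rint_le f B : bdm f -> (forall x, f x <= B) -> Rintegral mu setT f <= B.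
Proof.
move=> bf fB.
have := Rint_lin 1 (-1) (bdm_cst B) bf; rewrite Rint_cst => E.
have := Rint_ge0 (f := fun x => 1 * B + (-1) * f x).
rewrite E mul1r mulN1r subr_ge0; apply => x/=.
have := fB x; lra.
Qed.

Lemma Rint_ge f B : bdm f -> (forall x, B <= f x) -> B <= Rintegral mu setT f.
Proof.
move=> bf fB.
have := Rint_lin (-1) 1 (bdm_cst B) bf; rewrite Rint_cst => E.
have := Rint_ge0 (f := fun x => (-1) * B + 1 * f x).
rewrite E mul1r mulN1r addrC subr_ge0; apply => x/=.
have := fB x; lra.
Qed.

End Gen.


Section IntN.
Context (T : Type) (R : realType).
Implicit Types (I : (T -> \bar R) -> \bar R).

Definition monoI I := forall f g : T -> \bar R, (forall v, (0 <= f v)%E) ->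
  (forall v, (f v <= g v)%E) -> (I f <= I g)%E.
Definition ge0I I := forall f : T -> \bar R, (forall v, (0 <= f v)%E) -> (0 <= I f)%E.
Definition linI I (x : T -> R) (m1 m2 : R) := forall a b c : R,
  I (fun v => (a + b * x v + c * x v ^+ 2)%:E) = (a + b * m1 + c * m2)%:E.

Lemma intN_ext N I (F F' : seq T -> \bar R) :
  (forall t, size t = N -> F t = F' t) -> intN N I F = intN N I F'.
Proof.
elim: N F F' => [|N IH] F F' h /=; first exact: h.
congr I; apply: funext => v; apply: IH => t st; apply: h => /=; by rewrite st.
Qed.

Lemma intN_ge0 N I F : ge0I I -> (forall t, (0 <= F t)%E) -> (0 <= intN N I F)%E.
Proof.
move=> hI; elim: N F => [|N IH] F F0 /=; first exact: F0.
by apply: hI => v; apply: IH => t.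
Qed.

Lemma intN_mono N I F F' : ge0I I -> monoI I -> (forall t, (0 <= F t)%E) ->
  (forall t, (F t <= F' t)%E) -> (intN N I F <= intN N I F')%E.
Proof.
move=> h0 hI; elim: N F F' => [|N IH] F F' F0 FF' /=; first exact: FF'.
apply: hI => v; first exact: intN_ge0.
by apply: IH.
Qed.

Lemma intN_mono_size N I F F' : ge0I I -> monoI I -> (forall t, (0 <= F t)%E) ->
  (forall t, size t = N -> (F t <= F' t)%E) -> (intN N I F <= intN N I F')%E.
Proof.
move=> h0 hI; elim: N F F' => [|N IH] F F' F0 FF' /=; first exact: FF'.
apply: hI => v; first exact: intN_ge0.
by apply: IH => // t st; apply: FF' => /=; rewrite st.
Qed.

Definition Ssum (x : T -> R) (t : seq T) := \sum_(w <- t) x w.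

Lemma intN_quad N I x m1 m2 : linI I x m1 m2 -> forall a b c,
  intN N I (fun t => (a + b * Ssum x t + c * Ssum x t ^+ 2)%:E) =
  (a + b * (N%:R * m1) + c * (N%:R * m2 + N%:R * (N%:R - 1) * m1 ^+ 2))%:E.
Proof.
move=> hl; elim: N => [|N IH] a b c /=.
  by rewrite /Ssum big_nil; congr EFin; ring.
have -> : (fun v => intN N I (fun t => (a + b * Ssum x (v :: t) + c * Ssum x (v :: t) ^+ 2)%:E))
  = (fun v => ((a + b * (N%:R * m1) + c * (N%:R * m2 + N%:R * (N%:R - 1) * m1 ^+ 2))
       + (b + 2 * c * (N%:R * m1)) * x v + c * x v ^+ 2)%:E).
  apply: funext => v.
  have -> : (fun t => (a + b * Ssum x (v :: t) + c * Ssum x (v :: t) ^+ 2)%:E) =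
    (fun t => ((a + b * x v + c * x v ^+ 2) + (b + 2 * c * x v) * Ssum x t + c * Ssum x t ^+ 2)%:E).
    by apply: funext => t; rewrite /Ssum big_cons; congr EFin; ring.
  by rewrite IH; congr EFin; ring.
by rewrite hl; congr EFin; rewrite mulrSr; ring.
Qed.

Lemma intN_var N I x m1 m2 B A kap : (1 <= N)%N -> linI I x m1 m2 -> monoI I ->
  (forall v, `|x v| <= B) ->
  (intN N I (fun t => ((A + Ssum x t / N%:R) ^+ 2 + kap)%:E) <=
  ((A + m1) ^+ 2 + kap + B ^+ 2 / N%:R)%:E)%E.
Proof.
move=> N1 hl hm hB.
have N0 : N%:R != 0 :> R by rewrite pnatr_eq0 -lt0n.
have -> : (fun t => ((A + Ssum x t / N%:R) ^+ 2 + kap)%:E) =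
  (fun t => ((A ^+ 2 + kap) + (2 * A / N%:R) * Ssum x t + (N%:R^-2) * Ssum x t ^+ 2)%:E).
  by apply: funext => t; congr EFin; field.
rewrite (intN_quad _ hl) lee_fin.
have m2B : m2 <= B ^+ 2.
  have h1 := hl 0 0 1; have h2 := hl (B ^+ 2) 0 0.
  rewrite -lee_fin.
  have -> : m2%:E = (0 + 0 * m1 + 1 * m2)%:E by congr EFin; ring.
  rewrite -h1.
  have -> : (B ^+ 2)%:E = (B ^+ 2 + 0 * m1 + 0 * m2)%:E by congr EFin; ring.
  rewrite -h2; apply: hm => v; rewrite lee_fin.
    by rewrite !mul0r !add0r mul1r sqr_ge0.
  rewrite !mul0r !addr0 add0r mul1r -real_normK ?num_real//.
  rewrite lerXn2r ?nnegrE//; last exact: le_trans (hB v).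
have -> : A ^+ 2 + kap + 2 * A / N%:R * (N%:R * m1) +
   N%:R^-2 * (N%:R * m2 + N%:R * (N%:R - 1) * m1 ^+ 2) =
   (A + m1) ^+ 2 + kap + (m2 - m1 ^+ 2) / N%:R by field.
rewrite lerD2l ler_pM2r ?invr_gt0 ?ltr0n//.
by apply: le_trans m2B; rewrite lerBlDr lerDl sqr_ge0.
Qed.

End IntN.


Section Lip.
Context (R : realType) (d : nat).

Definition qt (m : nat) : d.-tuple R :=
  match (unpickle m : option (d.-tuple rat)) with
  | Some t => map_tuple (fun r : rat => ratr r) t
  | None => nseq_tuple d 0
  end.

Lemma edist_ge0 (x y : d.-tuple R) : 0 <= Defs.edist x y.
Proof. exact: sqrtr_ge0. Qed.

Lemma measurable_edist (q : d.-tuple R) : measurable_fun setT (fun x => Defs.edist x q).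
Proof.
apply: measurableT_comp; first exact: continuous_measurable_fun (@sqrt_continuous R).
apply: measurable_sum => i.
rewrite /GRing.exp /=.
apply: measurable_funM; apply: measurable_funB => //; exact: measurable_tnth.
Qed.

Lemma qt_dense (x : d.-tuple R) (e : R) : 0 < e -> exists m, Defs.edist x (qt m) <= e.
Proof.
move=> e0.
set e' := e / (d%:R + 1).
have e'0 : 0 < e' by rewrite divr_gt0// ltr_pwDr// ler0n.
have hr : forall i : 'I_d, exists r : rat, `|tnth x i - ratr r| < e'.
  move=> i.
  have [r] := @rat_in_itvoo R (tnth x i - e') (tnth x i + e') ltac:(lra).
  rewrite in_itv /= => /andP[h1 h2]; exists r.
  rewrite ltr_norml; apply/andP; split; lra.
have [f hf] := boolp.choice hr.
exists (pickle [tuple f i | i < d]).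
rewrite /qt pickleK /Defs.edist.
have -> : e = Num.sqrt (e ^+ 2) by rewrite sqrtr_sqr gtr0_norm.
rewrite ler_sqrt ?sqr_ge0//.
apply: (@le_trans _ _ (\sum_(i < d) e' ^+ 2)).
  apply: ler_sum => i _; rewrite tnth_map tnth_mktuple.
  rewrite -real_normK ?num_real// lerXn2r ?nnegrE//; exact: ltW.
rewrite sumr_const card_ord /e' expr_div_n.
have dp : 0 < d%:R + 1 :> R by rewrite ltr_pwDr// ler0n.
have -> : e ^+ 2 / (d%:R + 1) ^+ 2 *+ d = e ^+ 2 * (d%:R / (d%:R + 1) ^+ 2).
  by rewrite -mulr_natr; field; rewrite gt_eqF.
apply: ler_piMr; first exact: sqr_ge0.
rewrite ler_pdivrMr ?exprn_gt0// mul1r.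
apply: (@le_trans _ _ (d%:R + 1)); first by rewrite lerDl.
have := ler0n R d; nra.
Qed.

Variables (g : d.-tuple R -> R) (K : R).
Hypothesis K0 : 0 <= K.
Hypothesis hg : forall x x', `|g x - g x'| <= K * Defs.edist x x'.

Let phi m x := g (qt m) + K * Defs.edist x (qt m).

Fixpoint hseq k x := match k with
  | 0 => phi 0 x | k'.+1 => Num.min (hseq k' x) (phi k'.+1 x) end.

Lemma phi_ge x m : g x <= phi m x.
Proof. rewrite /phi -lerBlDl; apply: le_trans (ler_norm _) (hg _ _). Qed.

Lemma hseq_ge x k : g x <= hseq k x.
Proof. elim: k => [|k IH] /=; first exact: phi_ge. by rewrite le_min IH phi_ge. Qed.

Lemma hseq_le x m k : (m <= k)%N -> hseq k x <= phi m x.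
Proof.
elim: k => [|k IH]; first by rewrite leqn0 => /eqP ->.
rewrite leq_eqVlt => /orP[/eqP -> /=|]; first by rewrite ge_min lexx orbT.
by rewrite ltnS => /IH /= h; rewrite ge_min h.
Qed.

Lemma measurable_hseq k : measurable_fun setT (hseq k).
Proof.
have mphi m : measurable_fun setT (phi m).
  by apply: measurable_funD => //; apply: measurable_funM => //; exact: measurable_edist.
elim: k => [|k IH] /=; first exact: mphi.
exact: measurable_minr.
Qed.

Lemma lip_measurable : measurable_fun setT g.
Proof.
apply: (@measurable_fun_cvg _ _ _ _ hseq) => //; first exact: measurable_hseq.
move=> x _; apply/cvgrPdist_le => e e0.
have [m hm] : exists m, Defs.edist x (qt m) <= e / (2 * K + 1).
  apply: qt_dense.
  by rewrite divr_gt0// ltr_pwDr// mulr_ge0.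
exists m => // k /= mk.
rewrite distrC ger0_norm; last by rewrite subr_ge0 hseq_ge.
rewrite lerBlDl; apply: le_trans (hseq_le x mk) _.
rewrite /phi.
have h1 : g (qt m) <= g x + K * Defs.edist x (qt m).
  rewrite -lerBlDl; apply: le_trans (ler_norm _) _.
  by rewrite distrC; apply: le_trans (hg _ _) _.
have h2 : K * Defs.edist x (qt m) <= K * (e / (2 * K + 1)) by apply: ler_wpM2l.
have h3 : K * (e / (2 * K + 1)) * 2 <= e.
  have Kp : 0 < 2 * K + 1 by rewrite ltr_pwDr ?mulr_ge0.
  have -> : K * (e / (2 * K + 1)) * 2 = e * (2 * K / (2 * K + 1)).
    by field; rewrite gt_eqF.
  apply: ler_piMr; first exact: ltW.
  rewrite ler_pdivrMr// mul1r; lra.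
lra.
Qed.
End Lip.


Section Hfun.
Context (R : realType) (d : nat).
Local Notation U := (d.-tuple R).

Definition RK (k : R.-pker U ~> U) (u : U) (f : U -> R) : R :=
  fine (\int[k u]_w (f w)%:E).

Lemma RK_measurable (k : R.-pker U ~> U) (f : U -> R) : measurable_fun setT f -> (forall u, 0 <= f u) ->
  measurable_fun setT (fun u => RK k u f).
Proof.
move=> mf f0; apply: measurableT_comp => //.
apply: (measurable_fun_integral_kernel (l := fun u => k u)).
- by move=> A mA; exact: measurable_kernel.
- by move=> z; rewrite lee_fin.
- exact/measurable_EFinP.
Qed.

Lemma RK_EFin (k : R.-pker U ~> U) u f : bdm f -> (\int[k u]_w (f w)%:E = (RK k u f)%:E)%E.
Proof. move=> bf; rewrite /RK (bdm_EFin (@prob_kernel _ _ _ _ _ k u) bf) //. Qed.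

Variable G : nat -> U -> R.
Variable cc : R.
Hypothesis Gm : forall p, measurable_fun setT (G p).
Hypothesis Gb : forall p u, 0 < G p u <= cc.

Fixpoint hR (K : nat -> R.-pker U ~> U) (k p : nat) (u : U) : R :=
  match k with
  | 0 => 1
  | k'.+1 => G p u * RK (K p.+1) u (hR K k' p.+1)
  end.

Lemma hR_prop K k p : measurable_fun setT (hR K k p) /\ forall u, 0 <= hR K k p u <= cc ^+ k.
Proof.
have cc0 : 0 < cc by have /andP[h1 h2] := Gb 0 (nseq_tuple d 0); exact: lt_le_trans h2.
elim: k p => [|k IH] p /=; first by split => // u; rewrite expr0 ler01 lexx.
have [m hb] := IH p.+1.
have bf : bdm (hR K k p.+1).
  by split => //; exists (cc ^+ k) => u; have /andP[h1 h2] := hb u; rewrite ger0_norm.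
split.
  apply: measurable_funM => //; apply: RK_measurable => // u.
  by have /andP[] := hb u.
move=> u; have /andP[g0 gc] := Gb p u.
have r0 : 0 <= RK (K p.+1) u (hR K k p.+1).
  rewrite /RK (bdm_EFin (@prob_kernel _ _ _ _ _ (K p.+1) u) bf) /=.
  by apply: Rint_ge0 => w; have /andP[] := hb w.
have r1 : RK (K p.+1) u (hR K k p.+1) <= cc ^+ k.
  rewrite /RK (bdm_EFin (@prob_kernel _ _ _ _ _ (K p.+1) u) bf) /=.
  apply: Rint_le => // [|w]; [exact: (@prob_kernel _ _ _ _ _ (K p.+1) u)|by have /andP[] := hb w].
rewrite mulr_ge0 ?(ltW g0) //= exprS.
by apply: ler_pM => //; exact: ltW.
Qed.

Lemma hR_bdm K k p : bdm (hR K k p).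
Proof.
have [m hb] := hR_prop K k p; split => //; exists (cc ^+ k) => u.
by have /andP[h1 h2] := hb u; rewrite ger0_norm.
Qed.

Lemma hfun_hR K k p u : hfun G K k p u = (hR K k p u)%:E.
Proof.
elim: k p u => [|k IH] p u //=.
have -> : (fun u' => hfun G K k p.+1 u') = (fun u' => (hR K k p.+1 u')%:E).
  by apply: funext => u'; exact: IH.
by rewrite (RK_EFin _ _ (hR_bdm K k p.+1)).
Qed.

End Hfun.


Section Phi.
Context (R : realType) (d : nat).
Local Notation U := (d.-tuple R).
Local Notation T := (d.-tuple R * d.-tuple R)%type.
Variable Mn : R.-pker T ~> T.
Variable Gp : U -> R.
Hypothesis Gp0 : forall u, 0 < Gp u.
Variable s : seq T.

Let N : R := (size s)%:R.
Let g1 (v : T) := Gp v.1 / emp s (fun w => Gp w.1).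
Let g2 (v : T) := Gp v.2 / emp s (fun w => Gp w.2).
Let gb v := Num.min (g1 v) (g2 v).
Let a := emp s gb.
Let w1 v := (g1 v - gb v) / (N * emp s (fun x => g1 x - gb x)).
Let w2 v := (g2 v - gb v) / (N * emp s (fun x => g2 x - gb x)).

Lemma emp_ge0 (f : T -> R) : (forall v, 0 <= f v) -> 0 <= emp s f.
Proof. by move=> f0; rewrite /emp divr_ge0 ?ler0n// sumr_ge0. Qed.

Lemma g1_ge0 v : 0 <= g1 v.
Proof. rewrite /g1 divr_ge0//; [exact: ltW | apply: emp_ge0 => w; exact: ltW]. Qed.
Lemma g2_ge0 v : 0 <= g2 v.
Proof. rewrite /g2 divr_ge0//; [exact: ltW | apply: emp_ge0 => w; exact: ltW]. Qed.
Lemma gb_ge0 v : 0 <= gb v.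
Proof. by rewrite /gb le_min g1_ge0 g2_ge0. Qed.
Lemma gb_le1 v : gb v <= g1 v.
Proof. by rewrite /gb ge_min lexx. Qed.
Lemma gb_le2 v : gb v <= g2 v.
Proof. by rewrite /gb ge_min lexx orbT. Qed.
Lemma w1_ge0 v : 0 <= w1 v.
Proof.
rewrite /w1 divr_ge0 ?subr_ge0 ?gb_le1// mulr_ge0 ?ler0n// emp_ge0// => x.
by rewrite subr_ge0 gb_le1.
Qed.
Lemma w2_ge0 v : 0 <= w2 v.
Proof.
rewrite /w2 divr_ge0 ?subr_ge0 ?gb_le2// mulr_ge0 ?ler0n// emp_ge0// => x.
by rewrite subr_ge0 gb_le2.
Qed.

Lemma sum_g1 : s != [::] -> \sum_(v <- s) g1 v = N.
Proof.
move=> sn; rewrite /g1 -mulr_suml /emp.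
have N0 : N != 0 by rewrite /N pnatr_eq0 size_eq0.
have S0 : \sum_(v <- s) Gp v.1 != 0.
  rewrite gt_eqF//; case: s sn => // v t _; rewrite big_cons.
  by apply: ltr_pwDl => //; rewrite sumr_ge0// => w _; exact: ltW.
by rewrite /N; field; rewrite S0 -/N N0.
Qed.

Lemma sum_g2 : s != [::] -> \sum_(v <- s) g2 v = N.
Proof.
move=> sn; rewrite /g2 -mulr_suml /emp.
have N0 : N != 0 by rewrite /N pnatr_eq0 size_eq0.
have S0 : \sum_(v <- s) Gp v.2 != 0.
  rewrite gt_eqF//; case: s sn => // v t _; rewrite big_cons.
  by apply: ltr_pwDl => //; rewrite sumr_ge0// => w _; exact: ltW.
by rewrite /N; field; rewrite S0 -/N N0.
Qed.

Lemma a_le1 : a <= 1.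
Proof.
have [s0|sn] := eqVneq s [::]; first by rewrite /a /emp s0 big_nil mul0r ler01.
rewrite /a /emp ler_pdivrMr ?mul1r; last by rewrite ltr0n lt0n size_eq0.
by rewrite -/N -(sum_g1 sn); apply: ler_sum => v _; exact: gb_le1.
Qed.

Lemma PhiInt_ge0 F : (forall v, (0 <= F v)%E) -> (0 <= PhiInt Mn Gp s F)%E.
Proof.
move=> F0; rewrite /PhiInt /=.
apply: adde_ge0.
  apply: sume_ge0 => v _; apply: mule_ge0; last exact: integral_ge0.
  by rewrite lee_fin divr_ge0 ?ler0n// gb_ge0.
case: ifP => _ //; apply: mule_ge0; first by rewrite lee_fin subr_ge0 a_le1.
apply: sume_ge0 => v _; apply: sume_ge0 => w _; apply: mule_ge0; last exact: integral_ge0.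
by rewrite lee_fin mulr_ge0// ?w1_ge0 ?w2_ge0.
Qed.


Lemma PhiInt_mono : monoI (PhiInt Mn Gp s).
Proof.
move=> F F' F0 FF'; rewrite /PhiInt /=.
have iF v : (\int[Mn v]_w F w <= \int[Mn v]_w F' w)%E by exact: int_mono_ge0.
apply: leeD.
  apply: lee_sum => v _; apply: lee_pmul => //; last exact: integral_ge0.
  by rewrite lee_fin divr_ge0 ?ler0n// gb_ge0.
case: ifP => _ //; apply: lee_pmul => //.
- by rewrite lee_fin subr_ge0 a_le1.
- by apply: sume_ge0 => v _; apply: sume_ge0 => w _; apply: mule_ge0;
    [rewrite lee_fin mulr_ge0 ?w1_ge0 ?w2_ge0 | exact: integral_ge0].
apply: lee_sum => v _; apply: lee_sum => w _; apply: lee_pmul => //.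
- by rewrite lee_fin mulr_ge0 ?w1_ge0 ?w2_ge0.
- exact: integral_ge0.
Qed.

Definition RI (v : T) (f : T -> R) := fine (\int[Mn v]_w (f w)%:E).

Lemma RI_EFin v f : bdm f -> (\int[Mn v]_w (f w)%:E = (RI v f)%:E)%E.
Proof. by move=> bf; rewrite /RI (bdm_EFin (@prob_kernel _ _ _ _ _ Mn v) bf). Qed.

Definition PhiR (f : T -> R) :=
  \sum_(v <- s) (gb v / N) * RI v f +
  (if a == 1 then 0 else (1 - a) * \sum_(v <- s) \sum_(w <- s) (w1 v * w2 w) * RI (v.1, w.2) f).

Lemma PhiInt_EFin f : bdm f -> PhiInt Mn Gp s (fun w => (f w)%:E) = (PhiR f)%:E.
Proof.
move=> bf; rewrite /PhiInt /PhiR /=.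
under eq_bigr => v _ do rewrite (RI_EFin v bf) -EFinM.
rewrite sumEFin EFinD; f_equal.
case: ifP => _ //.
under eq_bigr => v _ do under eq_bigr => w _ do rewrite (RI_EFin _ bf) -EFinM.
under eq_bigr => v _ do rewrite sumEFin.
by rewrite sumEFin -EFinM.
Qed.


Lemma sum_lin (I : Type) (t : seq I) (c X Y : I -> R) al be :
  \sum_(i <- t) c i * (al * X i + be * Y i) =
  al * \sum_(i <- t) c i * X i + be * \sum_(i <- t) c i * Y i.
Proof. by rewrite !mulr_sumr -big_split; apply: eq_bigr => i _ /=; ring. Qed.

Lemma sum_lin' (I : Type) (t : seq I) (X Y : I -> R) al be :
  \sum_(i <- t) (al * X i + be * Y i) =
  al * \sum_(i <- t) X i + be * \sum_(i <- t) Y i.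
Proof. by rewrite !mulr_sumr -big_split. Qed.

Lemma RI_lin v f g al be : bdm f -> bdm g ->
  RI v (fun x => al * f x + be * g x) = al * RI v f + be * RI v g.
Proof. move=> bf bg; exact: (Rint_lin (@prob_kernel _ _ _ _ _ Mn v) al be bf bg). Qed.

Lemma RI_cst v r : RI v (fun _ => r) = r.
Proof. exact: (Rint_cst (@prob_kernel _ _ _ _ _ Mn v) r). Qed.

Lemma PhiR_lin f g al be : bdm f -> bdm g ->
  PhiR (fun x => al * f x + be * g x) = al * PhiR f + be * PhiR g.
Proof.
move=> bf bg; rewrite /PhiR.
under eq_bigr => v _ do rewrite (RI_lin v al be bf bg).
rewrite sum_lin; case: ifP => _; first by ring.
have E v : \sum_(w <- s) w1 v * w2 w * RI (v.1, w.2) (fun x => al * f x + be * g x) =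
  al * \sum_(w <- s) w1 v * w2 w * RI (v.1, w.2) f + be * \sum_(w <- s) w1 v * w2 w * RI (v.1, w.2) g.
  by under eq_bigr => w _ do rewrite (RI_lin _ al be bf bg); exact: sum_lin.
rewrite (eq_bigr _ (fun v _ => E v)).
rewrite sum_lin'; ring.
Qed.

Hypothesis sn : s != [::].

Lemma N_neq0 : N != 0.
Proof. by rewrite /N pnatr_eq0 size_eq0. Qed.

Lemma sum_gb : \sum_(v <- s) gb v = N * a.
Proof. rewrite /a /emp -/N; field; exact: N_neq0. Qed.

Lemma D1E : \sum_(v <- s) (g1 v - gb v) = N * (1 - a).
Proof. by rewrite sumrB sum_g1// sum_gb; ring. Qed.
Lemma D2E : \sum_(v <- s) (g2 v - gb v) = N * (1 - a).
Proof. by rewrite sumrB sum_g2// sum_gb; ring. Qed.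

Lemma sum_w1 : a != 1 -> \sum_(v <- s) w1 v = 1.
Proof.
move=> a1; rewrite /w1 -mulr_suml D1E /emp -/N D1E.
have h : 1 - a != 0 by rewrite subr_eq0 eq_sym.
by field; rewrite h N_neq0.
Qed.
Lemma sum_w2 : a != 1 -> \sum_(v <- s) w2 v = 1.
Proof.
move=> a1; rewrite /w2 -mulr_suml D2E /emp -/N D2E.
have h : 1 - a != 0 by rewrite subr_eq0 eq_sym.
by field; rewrite h N_neq0.
Qed.

Lemma w1_scale v : a != 1 -> (1 - a) * w1 v = (g1 v - gb v) / N.
Proof.
move=> a1; rewrite /w1 /emp -/N D1E.
have h : 1 - a != 0 by rewrite subr_eq0 eq_sym.
by field; rewrite h N_neq0.
Qed.
Lemma w2_scale v : a != 1 -> (1 - a) * w2 v = (g2 v - gb v) / N.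
Proof.
move=> a1; rewrite /w2 /emp -/N D2E.
have h : 1 - a != 0 by rewrite subr_eq0 eq_sym.
by field; rewrite h N_neq0.
Qed.

Lemma gb_eq1 v : a = 1 -> v \in s -> gb v = g1 v.
Proof.
move=> a1 vs.
have : \sum_(v <- s) (g1 v - gb v) == 0 by rewrite D1E a1 subrr mulr0.
rewrite psumr_eq0; last by move=> i _; rewrite subr_ge0 gb_le1.
by move=> /allP /(_ v vs) /= /eqP /eqP; rewrite subr_eq0 eq_sym => /eqP.
Qed.
Lemma gb_eq2 v : a = 1 -> v \in s -> gb v = g2 v.
Proof.
move=> a1 vs.
have : \sum_(v <- s) (g2 v - gb v) == 0 by rewrite D2E a1 subrr mulr0.
rewrite psumr_eq0; last by move=> i _; rewrite subr_ge0 gb_le2.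
by move=> /allP /(_ v vs) /= /eqP /eqP; rewrite subr_eq0 eq_sym => /eqP.
Qed.

Lemma PhiR_cst r : PhiR (fun _ => r) = r.
Proof.
rewrite /PhiR; under eq_bigr => v _ do rewrite RI_cst.
rewrite -mulr_suml -mulr_suml sum_gb.
have -> : N * a / N = a by field; exact: N_neq0.
case: ifPn => [/eqP ->|a1]; first by rewrite addr0 mul1r.
have E v : \sum_(w <- s) w1 v * w2 w * RI (v.1, w.2) (fun _ => r) = w1 v * r.
  under eq_bigr => w _ do rewrite RI_cst.
  by rewrite -mulr_suml -mulr_sumr sum_w2// mulr1.
rewrite (eq_bigr _ (fun v _ => E v)).
by rewrite -mulr_suml sum_w1//; ring.
Qed.

Variables (K1 K2 : R.-pker U ~> U).
Hypothesis marg1 : forall v (y : U -> R), bdm y ->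
  (\int[Mn v]_w (y w.1)%:E = \int[K1 v.1]_u (y u)%:E)%E.
Hypothesis marg2 : forall v (y : U -> R), bdm y ->
  (\int[Mn v]_w (y w.2)%:E = \int[K2 v.2]_u (y u)%:E)%E.

Lemma PhiR_fst y : bdm y ->
  PhiR (fun w => y w.1) = \sum_(v <- s) g1 v / N * RK K1 v.1 y.
Proof.
move=> by_; rewrite /PhiR.
have E v : RI v (fun w => y w.1) = RK K1 v.1 y by rewrite /RI marg1.
under eq_bigr => v _ do rewrite E.
case: ifPn => [/eqP a1|a1].
  rewrite addr0; apply: eq_big_seq => v vs; by rewrite gb_eq1.
have E2 v : \sum_(w <- s) w1 v * w2 w * RI (v.1, w.2) (fun w => y w.1) = w1 v * RK K1 v.1 y.
  under eq_bigr => w _ do rewrite E.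
  rewrite -[RHS]mulr1 -(sum_w2 a1) mulr_sumr; apply: eq_bigr => w _ /=; ring.
rewrite (eq_bigr _ (fun v _ => E2 v)).
rewrite mulr_sumr -big_split /=; apply: eq_bigr => v _.
rewrite mulrA w1_scale//; ring.
Qed.

Lemma PhiR_snd y : bdm y ->
  PhiR (fun w => y w.2) = \sum_(v <- s) g2 v / N * RK K2 v.2 y.
Proof.
move=> by_; rewrite /PhiR.
have E v : RI v (fun w => y w.2) = RK K2 v.2 y by rewrite /RI marg2.
under eq_bigr => v _ do rewrite E.
case: ifPn => [/eqP a1|a1].
  rewrite addr0; apply: eq_big_seq => v vs; by rewrite gb_eq2.
have E2 v : \sum_(w <- s) w1 v * w2 w * RI (v.1, w.2) (fun w => y w.2) =
   w1 v * \sum_(w <- s) w2 w * RK K2 w.2 y.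
  under eq_bigr => w _ do rewrite E.
  rewrite mulr_sumr; apply: eq_bigr => w _ /=; ring.
rewrite (eq_bigr _ (fun v _ => E2 v)).
rewrite -mulr_suml sum_w1// mul1r mulr_sumr -big_split /=; apply: eq_bigr => v _.
rewrite mulrA w2_scale//; ring.
Qed.

End Phi.


Section Chain.
Context (R : realType) (d : nat).
Local Notation U := (d.-tuple R).
Local Notation T := (d.-tuple R * d.-tuple R)%type.

Lemma emp_Ssum (s : seq T) (f : T -> R) : emp s f = Ssum f s / (size s)%:R.
Proof. by []. Qed.

Lemma emp_le (s : seq T) (f : T -> R) B : s != [::] -> (forall v, f v <= B) -> emp s f <= B.
Proof.
move=> sn fB; rewrite /emp ler_pdivrMr; last by rewrite ltr0n lt0n size_eq0.
elim: s sn => // v t IH _; rewrite big_cons /= mulrSr mulrDr mulr1 addrC.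
have [->|tn] := eqVneq t [::]; first by rewrite big_nil mulr0 !add0r.
by apply: lerD => //; exact: IH.
Qed.

Lemma emp_ge0' (s : seq T) (f : T -> R) : (forall v, 0 <= f v) -> 0 <= emp s f.
Proof. by move=> f0; rewrite /emp divr_ge0 ?ler0n// sumr_ge0. Qed.

Lemma emp1 (s : seq T) : s != [::] -> emp s (fun _ => 1 : R) = 1.
Proof.
move=> sn; rewrite /emp big_const_seq count_predT iter_addr addr0.
by rewrite divff// pnatr_eq0 size_eq0.
Qed.

Variable G : nat -> U -> R.
Variable cc : R.
Hypothesis Gm : forall p, measurable_fun setT (G p).
Hypothesis Gb : forall p u, 0 < G p u <= cc.
Variable M : nat -> R.-pker T ~> T.
Variables K1 K2 : nat -> R.-pker U ~> U.
Hypothesis marg1 : forall p v (y : U -> R), bdm y ->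
  (\int[M p.+1 v]_w (y w.1)%:E = \int[K1 p.+1 v.1]_u (y u)%:E)%E.
Hypothesis marg2 : forall p v (y : U -> R), bdm y ->
  (\int[M p.+1 v]_w (y w.2)%:E = \int[K2 p.+1 v.2]_u (y u)%:E)%E.
Variable N : nat.
Hypothesis N1 : (1 <= N)%N.

Definition Z1 k p (s : seq T) c := c * emp s (fun v => hR G K1 k p v.1).
Definition Z2 k p (s : seq T) c := c * emp s (fun v => hR G K2 k p v.2).

Lemma cc_gt0 : 0 < cc.
Proof. by have /andP[h1 h2] := Gb 0 (nseq_tuple d 0); exact: lt_le_trans h2. Qed.

Lemma hRb K k p u : 0 <= hR G K k p u <= cc ^+ k.
Proof. by have [_ h] := hR_prop Gm Gb K k p; exact: h. Qed.

Lemma emp_gt0 (s : seq T) (f : T -> R) : s != [::] -> (forall v, 0 < f v) -> 0 < emp s f.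
Proof.
move=> sn f0; rewrite /emp divr_gt0 ?ltr0n ?lt0n ?size_eq0//.
case: s sn => // v t _; rewrite big_cons; apply: ltr_pwDl => //.
by rewrite sumr_ge0// => w _; exact: ltW.
Qed.

Lemma bdm_fst (y : U -> R) : bdm y -> bdm (fun v : T => y v.1).
Proof.
move=> [my [B hB]]; split; last by exists B.
exact: measurableT_comp.
Qed.
Lemma bdm_snd (y : U -> R) : bdm y -> bdm (fun v : T => y v.2).
Proof.
move=> [my [B hB]]; split; last by exists B.
exact: measurableT_comp.
Qed.

Lemma Gp0 p : forall u, 0 < G p u.
Proof. by move=> u; have /andP[] := Gb p u. Qed.

Lemma chain_ge0 k : forall p s c1 c2 (F : R -> R -> \bar R), (forall x y, (0 <= F x y)%E) ->
  (0 <= chain G M N k p s c1 c2 F)%E.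
Proof.
elim: k => [|k IH] p s c1 c2 F F0 /=; first exact: F0.
apply: intN_ge0; first by move=> f; exact: (PhiInt_ge0 _ (Gp0 p) s).
by move=> t; exact: IH.
Qed.

Lemma term_bound (a c h P Q : R) : `|a| <= 1 -> 0 <= c <= P -> 0 <= h <= Q ->
  `|a * c * h| <= P * Q.
Proof.
move=> ha /andP[c0 cP] /andP[h0 hQ].
rewrite -mulrA normrM (ger0_norm (mulr_ge0 c0 h0)) -[leRHS]mul1r.
by apply: ler_pM => //; [exact: mulr_ge0|exact: ler_pM].
Qed.

Lemma term_bound2 (a h Q : R) : `|a| <= 1 -> 0 <= h <= Q -> `|a * h| <= Q.
Proof.
move=> ha /andP[h0 hQ]; rewrite normrM (ger0_norm h0) -[leRHS]mul1r.
exact: ler_pM.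
Qed.

Lemma chain_bound k : forall p (s : seq T) c1 c2 A kap a1 a2,
  0 <= kap -> size s = N -> 0 <= c1 <= cc ^+ p -> 0 <= c2 <= cc ^+ p ->
  `|a1| <= 1 -> `|a2| <= 1 ->
  (chain G M N k p s c1 c2 (fun x y => ((A + a1 * x + a2 * y) ^+ 2 + kap)%:E) <=
  ((A + a1 * Z1 k p s c1 + a2 * Z2 k p s c2) ^+ 2 + kap +
     k%:R * (2 * cc ^+ (p + k)) ^+ 2 / N%:R)%:E)%E.
Proof.
have sN (s : seq T) : size s = N -> s != [::].
  by move=> sz; rewrite -size_eq0 sz -lt0n.
elim: k => [|k IH] p s c1 c2 A kap a1 a2 kap0 sz hc1 hc2 ha1 ha2.
  by rewrite /= /Z1 /Z2 /= emp1 ?sN// !mulr1 mul0r mul0r addr0.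
rewrite /=.
set E1 := emp s (fun v => G p v.1).
set E2 := emp s (fun v => G p v.2).
have hE1 : 0 < E1 <= cc.
  apply/andP; split; first by apply: emp_gt0 => [|v]; [exact: sN|exact: Gp0].
  by apply: emp_le => [|v]; [exact: sN|have /andP[] := Gb p v.1].
have hE2 : 0 < E2 <= cc.
  apply/andP; split; first by apply: emp_gt0 => [|v]; [exact: sN|exact: Gp0].
  by apply: emp_le => [|v]; [exact: sN|have /andP[] := Gb p v.2].
set c1' := c1 * E1; set c2' := c2 * E2.
have hc1' : 0 <= c1' <= cc ^+ p.+1.
  case/andP: hc1 => h1 h2; case/andP: hE1 => h3 h4.
  apply/andP; split; first by rewrite /c1' /c2' mulr_ge0 // ltW.
  by rewrite /c1' /c2' exprSr ler_pM // ltW.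
have hc2' : 0 <= c2' <= cc ^+ p.+1.
  case/andP: hc2 => h1 h2; case/andP: hE2 => h3 h4.
  apply/andP; split; first by rewrite /c1' /c2' mulr_ge0 // ltW.
  by rewrite /c1' /c2' exprSr ler_pM // ltW.
set x := fun v : T => a1 * c1' * hR G K1 k p.+1 v.1 + a2 * c2' * hR G K2 k p.+1 v.2.
set B := 2 * cc ^+ (p + k.+1).
have bh1 : bdm (fun v : T => hR G K1 k p.+1 v.1) by apply: bdm_fst; exact: hR_bdm.
have bh2 : bdm (fun v : T => hR G K2 k p.+1 v.2) by apply: bdm_snd; exact: hR_bdm.
have bx : bdm x by exact: bdm_lin.
have bx2 : bdm (fun v => x v ^+ 2).
  have -> : (fun v => x v ^+ 2) = (fun v => x v * x v) by apply: funext => v; rewrite expr2.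
  exact: bdm_mul.
have hxB v : `|x v| <= B.
  rewrite /x /B; apply: le_trans (ler_normD _ _) _; rewrite mulr2n mulrDl mul1r.
  have cc0 := cc_gt0.
  have e : cc ^+ (p + k.+1) = cc ^+ p.+1 * cc ^+ k by rewrite -exprD addSnnS.
  rewrite e; apply: lerD; apply: term_bound => //; exact: hRb.
have hlin : linI (PhiInt (M p.+1) (G p) s) x (PhiR (M p.+1) (G p) s x)
   (PhiR (M p.+1) (G p) s (fun v => x v ^+ 2)).
  move=> al be ga.
  have bc : bdm (fun v => be * x v + ga * x v ^+ 2) by exact: bdm_lin.
  have -> : (fun v => (al + be * x v + ga * x v ^+ 2)%:E) =
     (fun v => ((fun v => 1 * (fun _ => al) v + 1 * (fun w => be * x w + ga * x w ^+ 2) v) v)%:E).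
    by apply: funext => v /=; congr EFin; ring.
  rewrite PhiInt_EFin; last by apply: bdm_lin => //; exact: bdm_cst.
  rewrite PhiR_lin //; last exact: bdm_cst.
  rewrite PhiR_lin // PhiR_cst ?sN //; last exact: Gp0.
  congr EFin; ring.
have hm1 : PhiR (M p.+1) (G p) s x = a1 * Z1 k.+1 p s c1 + a2 * Z2 k.+1 p s c2.
  rewrite PhiR_lin // (PhiR_fst (Gp0 p) (sN _ sz) (marg1 p)); last exact: hR_bdm.
  rewrite (PhiR_snd (Gp0 p) (sN _ sz) (marg2 p)); last exact: hR_bdm.
  have n0 : (size s)%:R != 0 :> R by rewrite pnatr_eq0 size_eq0 sN.
  have E10 : E1 != 0 by case/andP: hE1 => h _; rewrite gt_eqF.
  have E20 : E2 != 0 by case/andP: hE2 => h _; rewrite gt_eqF.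
  have S10 : \sum_(v <- s) G p v.1 != 0.
    by apply: contra E10 => /eqP h; rewrite /E1 /emp h mul0r.
  have S20 : \sum_(v <- s) G p v.2 != 0.
    by apply: contra E20 => /eqP h; rewrite /E2 /emp h mul0r.
  rewrite /Z1 /Z2 -!mulrA; congr (_ * (_ * _) + _ * (_ * _)).
    rewrite /emp [RHS]mulr_suml !mulr_sumr; apply: eq_bigr => v _ /=.
    by field; rewrite ?n0 ?S10.
  rewrite /emp [RHS]mulr_suml !mulr_sumr; apply: eq_bigr => v _ /=.
  by field; rewrite ?n0 ?S20.
apply: le_trans.
  apply: (intN_mono_size (F' := fun t => ((A + Ssum x t / N%:R) ^+ 2 + (kap + k%:R * B ^+ 2 / N%:R))%:E)).
  - by move=> f; exact: (PhiInt_ge0 _ (Gp0 p) s).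
  - exact: (PhiInt_mono _ (Gp0 p) s).
  - move=> t; apply: chain_ge0 => y z; rewrite lee_fin.
    by apply: addr_ge0; [exact: sqr_ge0|].
  move=> t st; apply: le_trans (IH p.+1 t c1' c2' A kap a1 a2 kap0 st hc1' hc2' ha1 ha2) _.
  rewrite lee_fin addSnnS -/B.
  have -> : A + a1 * Z1 k p.+1 t c1' + a2 * Z2 k p.+1 t c2' = A + Ssum x t / N%:R.
    by rewrite /Z1 /Z2 /emp st /Ssum big_split /= -!mulr_sumr; ring.
  by rewrite addrA.
apply: le_trans (intN_var A (kap + k%:R * B ^+ 2 / N%:R) N1 hlin (PhiInt_mono _ (Gp0 p) s) hxB) _.
rewrite lee_fin hm1 le_eqVlt; apply/orP; left; apply/eqP.
rewrite -natr1; ring.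
Qed.


Variable n : nat.

Lemma levelE_bound (eta0 : probability T R) A kap a1 a2 :
  0 <= kap -> `|a1| <= 1 -> `|a2| <= 1 ->
  (levelE G eta0 M N n (fun x y => ((A + a1 * x + a2 * y) ^+ 2 + kap)%:E) <=
  ((A + a1 * gamma1 G eta0 fst K1 n + a2 * gamma1 G eta0 snd K2 n) ^+ 2 + kap +
     n.+1%:R * (2 * cc ^+ n) ^+ 2 / N%:R)%:E)%E.
Proof.
move=> kap0 ha1 ha2; rewrite /levelE.
have e1 : eta0 setT = 1%E by exact: probability_setT.
set B := 2 * cc ^+ n.
set x := fun v : T => a1 * hR G K1 n 0 v.1 + a2 * hR G K2 n 0 v.2.
have bh1 : bdm (fun v : T => hR G K1 n 0 v.1) by apply: bdm_fst; exact: hR_bdm.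
have bh2 : bdm (fun v : T => hR G K2 n 0 v.2) by apply: bdm_snd; exact: hR_bdm.
have bx : bdm x by exact: bdm_lin.
have bx2 : bdm (fun v => x v ^+ 2).
  have -> : (fun v => x v ^+ 2) = (fun v => x v * x v) by apply: funext => v; rewrite expr2.
  exact: bdm_mul.
have hxB v : `|x v| <= B.
  rewrite /x /B; apply: le_trans (ler_normD _ _) _; rewrite mulr2n mulrDl mul1r.
  by apply: lerD; apply: term_bound2 => //; exact: hRb.
have hlin : linI (fun f => (\int[eta0]_v f v)%E) x (Rintegral eta0 setT x)
   (Rintegral eta0 setT (fun v => x v ^+ 2)).
  move=> al be ga /=.
  have bc : bdm (fun v => be * x v + ga * x v ^+ 2) by exact: bdm_lin.
  have -> : (fun v => (al + be * x v + ga * x v ^+ 2)%:E) =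
     (fun v => ((fun v => 1 * (fun _ => al) v + 1 * (fun w => be * x w + ga * x w ^+ 2) v) v)%:E).
    by apply: funext => v /=; congr EFin; ring.
  rewrite (bdm_EFin e1); last by apply: bdm_lin => //; exact: bdm_cst.
  rewrite (Rint_lin e1) //; last exact: bdm_cst.
  rewrite (Rint_lin e1) // (Rint_cst e1).
  congr EFin; ring.
have hm1 : Rintegral eta0 setT x = a1 * gamma1 G eta0 fst K1 n + a2 * gamma1 G eta0 snd K2 n.
  rewrite (Rint_lin e1) //.
  rewrite /gamma1.
  have -> : (fun v : T => hfun G K1 n 0 v.1) = (fun v => (hR G K1 n 0 v.1)%:E).
    by apply: funext => v; rewrite (hfun_hR Gm Gb).
  have -> : (fun v : T => hfun G K2 n 0 v.2) = (fun v => (hR G K2 n 0 v.2)%:E).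
    by apply: funext => v; rewrite (hfun_hR Gm Gb).
  by [].
have sN (s : seq T) : size s = N -> s != [::].
  by move=> sz; rewrite -size_eq0 sz -lt0n.
apply: le_trans.
  apply: (intN_mono_size (F' := fun t => ((A + Ssum x t / N%:R) ^+ 2 + (kap + n%:R * B ^+ 2 / N%:R))%:E)).
  - by move=> f f0; exact: integral_ge0.
  - by move=> f g f0 fg; exact: int_mono_ge0.
  - move=> t; apply: chain_ge0 => y z; rewrite lee_fin.
    by apply: addr_ge0; [exact: sqr_ge0|].
  move=> t st.
  have h1 : 0 <= (1 : R) <= cc ^+ 0 by rewrite expr0 ler01 lexx.
  apply: le_trans (@chain_bound n 0 t 1 1 A kap a1 a2 kap0 st h1 h1 ha1 ha2) _.
  rewrite lee_fin add0n -/B.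
  have -> : A + a1 * Z1 n 0 t 1 + a2 * Z2 n 0 t 1 = A + Ssum x t / N%:R.
    by rewrite /Z1 /Z2 /emp st /Ssum big_split /= -!mulr_sumr; ring.
  by rewrite addrA.
apply: le_trans (intN_var A (kap + n%:R * B ^+ 2 / N%:R) N1 hlin _ hxB) _.
  by move=> f g f0 fg; exact: int_mono_ge0.
rewrite lee_fin hm1 le_eqVlt; apply/orP; left; apply/eqP.
rewrite -natr1; ring.
Qed.

End Chain.


Section Mono.
Context (R : realType) (d : nat).
Local Notation U := (d.-tuple R).
Local Notation T := (d.-tuple R * d.-tuple R)%type.
Variable G : nat -> U -> R.
Hypothesis Gp : forall p u, 0 < G p u.
Variable M : nat -> R.-pker T ~> T.
Variable N : nat.

Lemma chain_ge0' k p s c1 c2 (F : R -> R -> \bar R) : (forall x y, (0 <= F x y)%E) ->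
  (0 <= chain G M N k p s c1 c2 F)%E.
Proof.
elim: k p s c1 c2 => [|k IH] p s c1 c2 F0 /=; first exact: F0.
apply: intN_ge0; first by move=> f; exact: (PhiInt_ge0 _ (Gp p) s).
by move=> t; exact: IH.
Qed.

Lemma chain_mono k p s c1 c2 (F F' : R -> R -> \bar R) : (forall x y, (0 <= F x y)%E) ->
  (forall x y, (F x y <= F' x y)%E) ->
  (chain G M N k p s c1 c2 F <= chain G M N k p s c1 c2 F')%E.
Proof.
elim: k p s c1 c2 => [|k IH] p s c1 c2 F0 FF /=; first exact: FF.
apply: intN_mono.
- by move=> f; exact: (PhiInt_ge0 _ (Gp p) s).
- exact: (PhiInt_mono _ (Gp p) s).
- by move=> t; exact: chain_ge0'.
by move=> t; exact: IH.
Qed.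

Variable eta0 : probability T R.
Variable n : nat.

Lemma levelE_ge0 F : (forall x y, (0 <= F x y)%E) -> (0 <= levelE G eta0 M N n F)%E.
Proof.
move=> F0; apply: intN_ge0; first by move=> f f0; exact: integral_ge0.
by move=> t; exact: chain_ge0'.
Qed.

Lemma levelE_mono F F' : (forall x y, (0 <= F x y)%E) ->
  (forall x y, (F x y <= F' x y)%E) ->
  (levelE G eta0 M N n F <= levelE G eta0 M N n F')%E.
Proof.
move=> F0 FF; apply: intN_mono.
- by move=> f f0; exact: integral_ge0.
- by move=> f g f0 fg; exact: int_mono_ge0.
- by move=> t; exact: chain_ge0'.
by move=> t; exact: chain_mono.
Qed.

End Mono.

Lemma levelsE_mono (R : realType) m (LE : nat -> (R -> R -> \bar R) -> \bar R)
  (F F' : (nat -> R) -> \bar R) :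
  (forall l, (l < m)%N -> forall F, (forall x y, (0 <= F x y)%E) -> (0 <= LE l F)%E) ->
  (forall l, (l < m)%N -> forall F F', (forall x y, (0 <= F x y)%E) ->
      (forall x y, (F x y <= F' x y)%E) -> (LE l F <= LE l F')%E) ->
  (forall D, (0 <= F D)%E) -> (forall D, (F D <= F' D)%E) ->
  (levelsE m LE F <= levelsE m LE F')%E.
Proof.
elim: m F F' => [|m IH] F F' h0 hm F0 FF /=; first exact: FF.
apply: IH.
- by move=> l lm; apply: h0; exact: ltnW.
- by move=> l lm; apply: hm; exact: ltnW.
- by move=> D; apply: h0 => // x y.
by move=> D; apply: hm => // x y.
Qed.

Unset Implicit Arguments.

Theorem mainTheorem1 (R : realType) (d : nat) (G : nat -> d.-tuple R -> R)
  (eta0 : nat -> probability (d.-tuple R * d.-tuple R)%type R)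
  (M : nat -> nat -> R.-pker (d.-tuple R * d.-tuple R)%type ~> (d.-tuple R * d.-tuple R)%type)
  (M1 M2 : nat -> nat -> R.-pker (d.-tuple R) ~> (d.-tuple R))
  (n L : nat) :
  (1 <= n)%N -> (1 <= L)%N ->
  A1 G ->
  (forall l : nat, (l <= L)%N ->
     marginal_kernels (M l) fst (M1 l) /\ marginal_kernels (M l) snd (M2 l) /\
     A2 (M1 l) /\ A2 (M2 l)) ->
  exists B : nat -> R,
    forall N : nat -> nat, (forall l : nat, (l <= L)%N -> (1 <= N l)%N) ->
      (levelsE L.+1 (fun l => levelE G (eta0 l) (M l) (N l) n)
         (fun D => ((\sum_(l < L.+1) D l
                     - \sum_(l < L.+1) ldiff l (gamma1 G (eta0 l) fst (M1 l) n)
                                              (gamma1 G (eta0 l) snd (M2 l) n)) ^+ 2)%:E)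
       <= (\sum_(l < L.+1) B l / (N l)%:R)%:E)%E.
Proof.
move=> _ _ [c [C [c1 [C0 hA]]]] hlev.
have Gm p : measurable_fun setT (G p).
  apply: (@lip_measurable _ _ _ C (ltW C0)) => x x'; exact: (hA p x x').2.
have Gb p u : 0 < G p u <= c.
  have /andP[h1 h2] := (hA p u u).1.
  rewrite (ltW h2) andbT; apply: lt_trans h1; rewrite invr_gt0; exact: lt_trans c1.
have Gp p u : 0 < G p u by have /andP[] := Gb p u.
pose B := fun l : nat => n.+1%:R * (2 * c ^+ n) ^+ 2 : R.
exists B => N hN.
pose LE := fun l => levelE G (eta0 l) (M l) (N l) n.
pose gd := fun l => ldiff l (gamma1 G (eta0 l) fst (M1 l) n) (gamma1 G (eta0 l) snd (M2 l) n).
have key : forall m, (m <= L.+1)%N -> forall A kap, 0 <= kap ->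
  (levelsE m LE (fun D => ((A + \sum_(l < m) D l) ^+ 2 + kap)%:E) <=
   ((A + \sum_(l < m) gd l) ^+ 2 + kap + \sum_(l < m) B l / (N l)%:R)%:E)%E.
  elim => [|m IH] hm A kap kap0.
    by rewrite /= !big_ord0 !addr0.
  rewrite /=.
  have hmL : (m <= L)%N by [].
  have [mk1 [mk2 _]] := hlev m hmL.
  have marg1 p v (y : d.-tuple R -> R) : bdm y ->
    (\int[M m p.+1 v]_w (y w.1)%:E = \int[M1 m p.+1 v.1]_u (y u)%:E)%E.
    by move=> [my [b hb]]; apply: mk1 => //; exists b.
  have marg2 p v (y : d.-tuple R -> R) : bdm y ->
    (\int[M m p.+1 v]_w (y w.2)%:E = \int[M2 m p.+1 v.2]_u (y u)%:E)%E.
    by move=> [my [b hb]]; apply: mk2 => //; exists b.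
  pose a2 : R := if m == 0%N then 0 else -1.
  apply: le_trans.
    apply: (levelsE_mono (F' := fun D => ((A + gd m + \sum_(l < m) D l) ^+ 2 + (kap + B m / (N m)%:R))%:E)).
    - move=> l lm F F0; apply: levelE_ge0 => //.
    - move=> l lm F F' F0 FF; apply: levelE_mono => //.
    - move=> D; apply: levelE_ge0 => // x y; rewrite lee_fin.
      by apply: addr_ge0; [exact: sqr_ge0|].
    move=> D.
    have -> : (fun c1 c2 => ((A + \sum_(l < m.+1) (if l == m :> nat then ldiff m c1 c2 else D l)) ^+ 2 + kap)%:E)
       = (fun c1 c2 => (((A + \sum_(l < m) D l) + 1 * c1 + a2 * c2) ^+ 2 + kap)%:E).
      apply: funext => x; apply: funext => y; congr EFin; congr (_ ^+ 2 + _).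
      rewrite big_ord_recr /= eqxx.
      have -> : \sum_(i < m) (if widen_ord (leqnSn m) i == m :> nat then ldiff m x y else D (widen_ord (leqnSn m) i)) = \sum_(i < m) D i.
        by apply: eq_bigr => i _ /=; rewrite ltn_eqF.
      rewrite /ldiff /a2; case: (m == 0%N); ring.
    apply: le_trans.
      apply: (levelE_bound Gm Gb marg1 marg2 (hN m hmL)) => //.
        by rewrite normr1.
      by rewrite /a2; case: (m == 0%N); rewrite ?normr0 ?normrN ?normr1 ?ler01.
    rewrite lee_fin /gd /ldiff /a2 /B.
    by case: (m == 0%N); rewrite le_eqVlt; apply/orP; left; apply/eqP; ring.
  apply: le_trans (IH (ltnW hm) (A + gd m) (kap + B m / (N m)%:R) _) _.
    by apply: addr_ge0 => //; rewrite divr_ge0 ?ler0n// /B mulr_ge0 ?ler0n ?sqr_ge0.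
  rewrite lee_fin !big_ord_recr /=.
  by rewrite le_eqVlt; apply/orP; left; apply/eqP; ring.
have -> : (fun D : nat -> R => ((\sum_(l < L.+1) D l - \sum_(l < L.+1) gd l) ^+ 2)%:E) =
  (fun D : nat -> R => ((- \sum_(l < L.+1) gd l + \sum_(l < L.+1) D l) ^+ 2 + 0)%:E).
  by apply: funext => D; congr EFin; ring.
apply: le_trans (key L.+1 (leqnn _) (- \sum_(l < L.+1) gd l) 0 (lexx _)) _.
rewrite lee_fin addNr expr0n /= !add0r.
by rewrite lexx.
Qed.
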